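(* (1) For every $\varepsilon\ge 0$, the optimal partition selection primitive for $(\varepsilon,0)$-differential privacy is $\pi_{\mathrm{opt}}(n)=0$ for all $n\in\mathbb{N}$. (2) For every $\delta\in[0,1]$, the optimal partition selection primitive for $(0,\delta)$-differential privacy is $\pi_{\mathrm{opt}}(n)=\min(1,n\delta)$ for all $n\in\mathbb{N}$.
   Context: $\mathbb{N}=\{0,1,2,\dots\}$. A partition selection primitive is a function $\pi:\mathbb{N}\to[0,1]$ with $\pi(0)=0$; it is interpreted as: count the number $n$ of users in a partition and release (keep) the partition with probability $\pi(n)$, drop it otherwise. Let $\rho_\pi(n)$ be the random variable in $\{\mathrm{drop},\mathrm{keep}\}$ equal to keep with probability $\pi(n)$ and drop with probability $1-\pi(n)$. The primitive $\pi$ is $(\varepsilon,\delta)$-differentially private if for all $n,n'\in\mathbb{N}$ with $|n-n'|=1$ and all $S\subseteq\{\mathrm{drop},\mathrm{keep}\}$, $\Pr[\rho_\pi(n)\in S]\le e^{\varepsilon}\Pr[\rho_\pi(n')\in S]+\delta$. A primitive $\pi_{\mathrm{opt}}$ is optimal for $(\varepsilon,\delta)$-DP if it is $(\varepsilon,\delta)$-differentially private and for every $(\varepsilon,\delta)$-differentially private partition selection primitive $\pi$ and every $n\in\mathbb{N}$, $\pi(n)\le\pi_{\mathrm{opt}}(n)$. *)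

(* Defs.v *)
From Stdlib Require Import Reals Lra Lia.
Open Scope R_scope.

Inductive outcome : Type := drop | keep.

Definition is_primitive (pi : nat -> R) : Prop :=
  pi 0%nat = 0 /\ forall n, 0 <= pi n <= 1.

Definition prob_outcome (pi : nat -> R) (n : nat) (o : outcome) : R :=
  match o with keep => pi n | drop => 1 - pi n end.

Definition prob_in (pi : nat -> R) (n : nat) (S : outcome -> bool) : R :=
  (if S drop then prob_outcome pi n drop else 0)
  + (if S keep then prob_outcome pi n keep else 0).

Definition is_dp (eps delta : R) (pi : nat -> R) : Prop :=
  is_primitive pi /\
  forall (n n' : nat) (S : outcome -> bool),
    (n = Datatypes.S n' \/ n' = Datatypes.S n) ->
    prob_in pi n S <= exp eps * prob_in pi n' S + delta.

Definition is_optimal (eps delta : R) (pi_opt : nat -> R) : Prop :=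
  is_dp eps delta pi_opt /\
  forall pi : nat -> R, is_dp eps delta pi -> forall n : nat, pi n <= pi_opt n.

(* Main.v *)
Require Import Defs.
From Stdlib Require Import Reals Lra Lia.
Open Scope R_scope.

Lemma keepS : forall pi n, prob_in pi n (fun o => match o with keep => true | drop => false end) = pi n.
Proof. intros; unfold prob_in; simpl; ring. Qed.

Lemma rmin_step : forall d k, 0 <= d ->
  Rmin 1 (INR (S k) * d) <= Rmin 1 (INR k * d) + d /\
  Rmin 1 (INR k * d) <= Rmin 1 (INR (S k) * d) + d /\
  Rmin 1 (INR k * d) <= Rmin 1 (INR (S k) * d).
Proof.
  intros d k Hd. rewrite S_INR. pose proof (pos_INR k).
  assert (0 <= INR k * d) by (apply Rmult_le_pos; lra).
  unfold Rmin; destruct (Rle_dec 1 ((INR k + 1) * d)); destruct (Rle_dec 1 (INR k * d)); nra.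
Qed.

Theorem theorem2 :
  (forall eps : R, 0 <= eps -> is_optimal eps 0 (fun _ : nat => 0)) /\
  (forall delta : R, 0 <= delta <= 1 ->
     is_optimal 0 delta (fun n : nat => Rmin 1 (INR n * delta))).
Proof.
  split.
  - intros eps He. assert (1 <= exp eps).
    { destruct (Req_dec eps 0). subst; rewrite exp_0; lra.
      left; rewrite <- exp_0; apply exp_increasing; lra. }
    split.
    + split. split; [reflexivity| intros; lra].
      intros n n' S _. unfold prob_in, prob_outcome.
      destruct (S drop), (S keep); nra.
    + intros pi [[H0 Hr] Hdp] n. induction n.
      * rewrite H0; lra.
      * pose proof (Hdp (S n) n (fun o => match o with keep => true | drop => false end) (or_introl eq_refl)).
        rewrite !keepS in H1. pose proof (Hr (S n)). nra.
  - intros d Hd. split.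
    + split. split.
      * simpl. rewrite Rmult_0_l. unfold Rmin; destruct (Rle_dec 1 0); lra.
      * intros n. pose proof (pos_INR n).
        assert (0 <= INR n * d) by (apply Rmult_le_pos; lra).
        unfold Rmin; destruct (Rle_dec 1 (INR n * d)); lra.
      * intros n n' S Hadj. rewrite exp_0. unfold prob_in, prob_outcome.
        destruct Hadj; subst; [pose proof (rmin_step d n' ltac:(lra)) | pose proof (rmin_step d n ltac:(lra))];
        destruct (S drop), (S keep); lra.
    + intros pi [[H0 Hr] Hdp] n. apply Rmin_glb; [apply Hr|].
      induction n.
      * rewrite H0; simpl; lra.
      * pose proof (Hdp (S n) n (fun o => match o with keep => true | drop => false end) (or_introl eq_refl)).
        rewrite !keepS, exp_0 in H. rewrite S_INR. lra.
Qed.
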